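(* Let $k\ge 2$ be an integer. For any $k-1$ distinct positive integers $a_1<a_2<\cdots<a_{k-1}$, there exists an index $i$ with $2\left\lfloor\frac{k-1}{3}\right\rfloor\leq a_i\leq a_{k-1}-\left\lfloor\frac{k-1}{3}\right\rfloor$. *)

(* Defs.v *)
From mathcomp Require Import all_boot.

(* Main.v *)
Require Import Defs.
From mathcomp Require Import all_boot.
From mathcomp Require Import zify.

Theorem lemma2 (k : nat) (a : nat -> nat) :
  2 <= k ->
  (forall i, 1 <= i <= k - 1 -> 0 < a i) ->
  (forall i j, 1 <= i -> i < j -> j <= k - 1 -> a i < a j) ->
  exists i, [/\ 1 <= i <= k - 1,
               2 * ((k - 1) %/ 3) <= a i
             & a i <= a (k - 1) - (k - 1) %/ 3].
Proof.
move=> hk hpos hinc.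
set n := k - 1.
have step : forall d i, 1 <= i -> i + d <= n -> a i + d <= a (i + d).
  elim=> [|d IH] i hi hd; first by rewrite !addn0.
  have h1 := IH i hi (ltac:(rewrite addnS in hd; lia)).
  have h2 := hinc (i + d) (i + d.+1) (leq_trans hi (leq_addr _ _)) ltac:(rewrite addnS) hd.
  lia.
have ge : forall i, 1 <= i <= n -> i <= a i.
  move=> i /andP[h1 h2].
  have := step (i - 1) 1 (leqnn _) ltac:(lia).
  have := hpos 1 ltac:(rewrite /n; apply/andP; split; lia).
  have -> : 1 + (i - 1) = i by lia.
  lia.
set m := n %/ 3.
have hm : 3 * m <= n by rewrite /m; have := leq_trunc_div n 3; lia.
exists (n - m).
have hn1 : 1 <= n by rewrite /n; lia.
have hi : 1 <= n - m by lia.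
have := ge (n - m) ltac:(apply/andP; split; lia).
have := step m (n - m) hi ltac:(lia).
have -> : n - m + m = n by lia.
move=> h1 h2; split; [apply/andP; split; lia | lia | lia].
Qed.
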